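(* Let $V=(\mathbb{F}_2)^r$, $W=(\mathbb{F}_2)^s$ with $s>r$, let $\alpha:V\to W$ be injective, and let $\sigma\in\mathrm{Sym}(V)$ be linearly extendible via $\alpha$. Let $T=\langle\alpha(V)\rangle$ and let $\sigma':W\to W$ be defined as follows: for $t\in T$ written as $t=\sum_{j=1}^{\iota}\alpha(v^j)$ with $v^j\in V$, set $\sigma'(t)=\sum_{j=1}^{\iota}\alpha(\sigma(v^j))$; fix a subset $B$ of the standard basis $\{\mathbf e_1,\dots,\mathbf e_s\}$ of $W$ with $|B|=s-\dim T$ and $W=T\oplus\langle B\rangle$, and for $w=w_T+w_B$ with $w_T\in T$, $w_B\in\langle B\rangle$ set $\sigma'(w)=\sigma'(w_T)+w_B$. Then $\sigma'$ is well defined and $\sigma'\in\mathrm{GL}(W)$.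
   Context: For $\sigma\in\mathrm{Sym}(V)$ and injective $\alpha:V\to W$, $\sigma$ is called linearly extendible via $\alpha$ if for every finite family $\{v^i\}_{i\in I}\subset V$ one has $\sum_{i\in I}\alpha(v^i)=0\iff\sum_{i\in I}\alpha(\sigma(v^i))=0$. *)

(* Defs.v *)
From HB Require Import structures.
From mathcomp Require Import all_boot all_order all_algebra all_fingroup.
Set Implicit Arguments. Unset Strict Implicit. Unset Printing Implicit Defensive.
Import GRing.Theory.
Local Open Scope ring_scope.

Notation Vr r := 'rV['F_2]_r.

Definition lin_extendible (r s : nat) (sigma : {perm Vr r})
  (alpha : Vr r -> Vr s) : Prop :=
  forall vs : seq (Vr r),
    \sum_(v <- vs) alpha v = 0 <-> \sum_(v <- vs) alpha (sigma v) = 0.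

Definition spanT (r s : nat) (alpha : Vr r -> Vr s) : {vspace Vr s} :=
  <<[seq alpha v | v <- enum (Vr r)]>>%VS.

Definition stdvec (s : nat) (i : 'I_s) : Vr s := delta_mx 0 i.

Definition spanB (s : nat) (B : {set 'I_s}) : {vspace Vr s} :=
  <<[seq stdvec i | i <- enum B]>>%VS.

(* Main.v *)
Require Import Defs.
From HB Require Import structures.
From mathcomp Require Import all_boot all_order all_algebra all_fingroup.
Import GRing.Theory.
Local Open Scope ring_scope.

Lemma F2_cases (x : 'F_2) : x = 0 \/ x = 1.
Proof. case: x => [[|[|k]] Hk]; [left|right|]; try exact: val_inj. by []. Qed.

Lemma sum_list_coef (r s : nat) (n : nat) (g : 'I_n -> Vr r) (d : 'I_n -> 'F_2)
  (F : Vr r -> Vr s) :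
  \sum_(v <- [seq g i | i <- enum 'I_n & d i != 0]) F v = \sum_i d i *: F (g i).
Proof.
rewrite big_map big_filter big_mkcond big_enum /=.
apply: eq_bigr => i _; case: (F2_cases (d i)) => ->; by rewrite ?scale0r ?scale1r.
Qed.

Theorem mainTheorem2 (r s : nat) (hrs : (r < s)%N)
  (alpha : Vr r -> Vr s) (halpha : injective alpha)
  (sigma : {perm Vr r}) (hsig : lin_extendible sigma alpha)
  (B : {set 'I_s})
  (hBcard : #|B| = (s - \dim (spanT alpha))%N)
  (hBdir : directv (spanT alpha + spanB B))
  (hBfull : (spanT alpha + spanB B)%VS = fullv) :
  exists sigma' : Vr s -> Vr s,
    (forall vs : seq (Vr r),
        sigma' (\sum_(v <- vs) alpha v) = \sum_(v <- vs) alpha (sigma v)) /\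
    (forall t b : Vr s, t \in spanT alpha -> b \in spanB B ->
        sigma' (t + b) = sigma' t + b) /\
    linear sigma' /\ bijective sigma'.
Proof.
set T := spanT alpha; set Bs := spanB B.
have capTB : (T :&: Bs = 0)%VS by apply/directv_addP.
have capBT : (Bs :&: T = 0)%VS by rewrite capvC.
have inTB w : w \in (T + Bs)%VS by rewrite hBfull memvf.
pose pT := daddv_pi T Bs; pose pB := daddv_pi Bs T.
have pTB w : pT w + pB w = w by apply: daddv_pi_add.
have pT_T t : t \in T -> pT t = t by move=> ?; apply: daddv_pi_id.
have pB_B b : b \in Bs -> pB b = b by move=> ?; apply: daddv_pi_id.
have pB_T t : t \in T -> pB t = 0.
  by move=> Tt; apply: (addrI t); rewrite addr0 -[RHS](pTB t) pT_T.
have pT_B b : b \in Bs -> pT b = 0.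
  by move=> Bb; apply: (addIr b); rewrite add0r -[RHS](pTB b) pB_B.
set e := enum (Vr r).
pose X := in_tuple [seq alpha v | v <- e].
pose n := size [seq alpha v | v <- e].
pose g (i : 'I_n) := nth 0 e i.
have Xg (i : 'I_n) : X`_i = alpha (g i).
  by rewrite /= (nth_map 0) // -(size_map alpha).
pose Y (i : 'I_n) := alpha (sigma (g i)).
have key (d : 'I_n -> 'F_2) :
  \sum_i d i *: X`_i = 0 <-> \sum_i d i *: Y i = 0.
  rewrite (eq_bigr (fun i => d i *: alpha (g i))); last by move=> i _; rewrite Xg.
  rewrite -(@sum_list_coef r s n g d alpha) -(@sum_list_coef r s n g d (fun v => alpha (sigma v))).
  exact: hsig.
have memT v : alpha v \in T by apply: memv_span; apply: map_f; rewrite mem_enum.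
pose phi t := \sum_i coord X i t *: Y i.
have phi_lin : linear phi.
  move=> a u v; rewrite /phi scaler_sumr -big_split /=; apply: eq_bigr => i _.
  by rewrite linearP scalerDl scalerA.
have phiD u v : phi (u + v) = phi u + phi v.
  by rewrite -{1}[u]scale1r phi_lin scale1r.
have phi0 : phi 0 = 0 by rewrite /phi big1 // => i _; rewrite linear0 scale0r.
have phiT t : phi t \in T.
  by apply: rpred_sum => i _; apply: rpredZ; rewrite /Y; apply: memT.
have wd (d : 'I_n -> 'F_2) t : t = \sum_i d i *: X`_i -> phi t = \sum_i d i *: Y i.
  move=> tE; have tT : t \in span X by rewrite tE; apply: rpred_sum => i _; apply: rpredZ; apply: memv_span; apply: mem_nth.
  have := coord_span tT; rewrite {1}tE => /eqP; rewrite -subr_eq0 -sumrB.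
  under eq_bigr do rewrite -scalerBl.
  move/eqP/key; rewrite /phi.
  under eq_bigr do rewrite scalerBl.
  by rewrite sumrB => /eqP; rewrite subr_eq0 => /eqP ->.
have phi_alpha v : phi (alpha v) = alpha (sigma v).
  have hi : (index v e < n)%N by rewrite /n size_map index_mem mem_enum.
  pose i0 := Ordinal hi.
  have gi0 : g i0 = v by rewrite /g nth_index // mem_enum.
  have sel (F : 'I_n -> Vr s) : \sum_i (i == i0)%:R *: F i = F i0.
    rewrite (bigD1 i0) //= eqxx scale1r big1 ?addr0 // => j /negbTE ->.
    by rewrite scale0r.
  by rewrite (wd (fun i => (i == i0)%:R)) ?sel /Y ?gi0 // Xg gi0.
have phi_sum vs : phi (\sum_(v <- vs) alpha v) = \sum_(v <- vs) alpha (sigma v).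
  elim: vs => [|w vs IH]; first by rewrite !big_nil phi0.
  by rewrite !big_cons phiD IH phi_alpha.
pose sg w := phi (pT w) + pB w.
have sg_lin : linear sg.
  move=> a u v; rewrite /sg !linearP /= phi_lin scalerDr addrACA //.
have sg_inj : injective sg.
  move=> u v huv; apply/eqP; rewrite -subr_eq0; apply/eqP.
  have h0 : sg (u - v) = 0.
    by rewrite addrC -scaleN1r sg_lin huv scaleN1r addNr.
  set w := u - v in h0 *.
  have h1 : phi (pT w) + pB w = 0 := h0.
  have hB : pB w = - phi (pT w) by apply/eqP; rewrite -addr_eq0 addrC h1.
  have hz : phi (pT w) = 0.
    apply/eqP; rewrite -oppr_eq0 -memv0 -capTB memv_cap rpredN phiT -hB.
    exact: memv_pi.
  have pTw0 : pT w = 0.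
    have tT : pT w \in span X by apply: memv_pi.
    rewrite (coord_span tT); apply/key; exact: hz.
  by rewrite -[LHS](pTB w) hB hz pTw0 oppr0 addr0.
exists sg; split; last split; last split.
- move=> vs; rewrite /sg pT_T ?pB_T ?addr0 ?phi_sum //;
  by apply: rpred_sum => v _; apply: memT.
- move=> t b Tt Bb; rewrite /sg !linearD /= pT_T // pT_B // pB_T // pB_B //.
  by rewrite addr0 add0r addr0.
- exact: sg_lin.
- exact: injF_bij.
Qed.
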